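(* Let $G=(V,E;w)$ be a graph with no isolated vertices and nonnegative edge weights $w$, and let $c$ be the cost function of the edge cover game on $G$. A vector $a\in\mathbb{R}_{\ge 0}^{V}$ satisfies $a(S)\le c(S)$ for all $S\subseteq V$ if and only if for every vertex $v\in V$ and every nonempty subset $T\subseteq N(v)$ we have $a(T\cup\{v\})\le \sum_{u\in T} w_{vu}$.
   Context: $N(v)$ is the set of neighbours of $v$. For $a\in\mathbb{R}^V$ and $S\subseteq V$, $a(S)=\sum_{i\in S}a_i$. The edge cover game on $G$ has player set $V$ and cost function $c:2^V\to\mathbb{R}_{\ge0}$, where $c(S)$ is the minimum total weight $\sum_{e\in K}w_e$ over edge sets $K\subseteq E$ such that every vertex of $S$ is incident to at least one edge of $K$ (equivalently, $K\subseteq E[S]\cup\delta(S)$, where $E[S]$ is the set of edges with both ends in $S$ and $\delta(S)$ the set of edges with exactly one end in $S$); $c(\emptyset)=0$. *)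

(* Defs.v *)
From mathcomp Require Import all_boot all_order all_algebra.
Set Implicit Arguments. Unset Strict Implicit. Unset Printing Implicit Defensive.
Import Order.TTheory GRing.Theory Num.Theory.
Local Open Scope ring_scope.

(* A (simple, loopless) graph on the finite vertex type V is given by its edge
   set E : {set {set V}}, each edge being a 2-element subset of V.
   Edge weights are a function w : {set V} -> R (only its values on E matter);
   w_{vu} is w [set v; u]. *)

Definition is_graph (V : finType) (E : {set {set V}}) : Prop :=
  forall f, f \in E -> #|f| = 2%N.

Definition no_isolated (V : finType) (E : {set {set V}}) : Prop :=
  forall v : V, exists2 f, f \in E & v \in f.

Definition nonneg_weights (R : realFieldType) (V : finType)
  (E : {set {set V}}) (w : {set V} -> R) : Prop :=
  forall f, f \in E -> 0 <= w f.

Definition nbhd (V : finType) (E : {set {set V}}) (v : V) : {set V} :=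
  [set u | [set v; u] \in E].

Definition covers (V : finType) (K : {set {set V}}) (S : {set V}) : bool :=
  [forall v in S, [exists f in K, v \in f]].

Definition wsum (R : realFieldType) (V : finType) (w : {set V} -> R)
  (K : {set {set V}}) : R := \sum_(f in K) w f.

(* The minimum is taken with
   initial value w(E); when G has no isolated vertices E itself covers every S,
   so this is exactly the minimum over the feasible edge sets. *)
Definition ec_cost (R : realFieldType) (V : finType) (E : {set {set V}})
  (w : {set V} -> R) (S : {set V}) : R :=
  \big[Num.min/wsum w E]_(K : {set {set V}} | (K \subset E) && covers K S)
     wsum w K.

Definition aset (R : realFieldType) (V : finType) (a : V -> R) (S : {set V}) : R :=
  \sum_(i in S) a i.

(* Main.v *)
Require Import Defs.
From mathcomp Require Import all_boot all_order all_algebra.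
Import Order.TTheory GRing.Theory Num.Theory.
Local Open Scope ring_scope.

Lemma key (R : realFieldType) (V : finType) (E : {set {set V}})
  (w : {set V} -> R) (a : V -> R)
  (hG : is_graph E) (ha : forall v, 0 <= a v)
  (hs : forall (v : V) (T : {set V}), T != set0 -> T \subset nbhd E v ->
     aset a (v |: T) <= \sum_(u in T) w [set v; u])
  (hw : nonneg_weights E w) (S : {set V}) (K : {set {set V}}) :
  K \subset E -> covers K S -> aset a S <= wsum w K.
Proof.
move=> KE /forall_inP cov.
pose g v := odflt set0 [pick f in K | v \in f].
have gP : forall v, v \in S -> (g v \in K) /\ (v \in g v).
  move=> v /cov /existsP [f /andP [fK vf]].
  rewrite /g; case: pickP => [f' /andP [] //|/(_ f)]; by rewrite fK vf.
have edge : forall f, f \in E -> \sum_(v in f) a v <= w f.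
  move=> f fE; have := hG _ fE; move/eqP/cards2P => [x [y [xy ef]]].
  have y0 : [set y] != set0 by apply/set0Pn; exists y; rewrite inE.
  have ys : [set y] \subset nbhd E x by rewrite sub1set inE -ef.
  have := hs x [set y] y0 ys; rewrite /aset big_set1 ef.
  by [].
rewrite /aset /wsum.
rewrite (partition_big g (mem K)) /=; last by move=> v /gP [].
apply: ler_sum => f fK.
apply: le_trans (edge f (subsetP KE f fK)).
rewrite [X in _ <= X](bigID (fun v => (v \in S) && (g v == f))) /=.
rewrite -[X in X <= _]addr0; apply: lerD; last by apply: sumr_ge0.
rewrite le_eqVlt; apply/orP; left; apply/eqP; apply: eq_bigl => v.
case vS: (v \in S); rewrite ?andbF //=; case: eqP => [<-|]; rewrite ?andbF //.
by case: (gP v vS) => _ ->.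
Qed.

Theorem lemma5 (R : realFieldType) (V : finType) (E : {set {set V}})
  (w : {set V} -> R) (a : V -> R)
  (hG : is_graph E) (hiso : no_isolated E) (hw : nonneg_weights E w)
  (ha : forall v, 0 <= a v) :
  (forall S : {set V}, aset a S <= ec_cost E w S) <->
  (forall (v : V) (T : {set V}), T != set0 -> T \subset nbhd E v ->
     aset a (v |: T) <= \sum_(u in T) w [set v; u]).
Proof.
split.
- move=> H v T T0 Tsub.
  pose K := [set [set v; u] | u in T].
  have KE : K \subset E.
    apply/subsetP => f /imsetP [u uT ->].
    by have := subsetP Tsub u uT; rewrite inE.
  have neq : forall u, u \in T -> u != v.
    move=> u uT; have := subsetP Tsub u uT; rewrite inE => /hG.
    by rewrite cards2 eq_sym; case: (u == v).
  have cov : covers K (v |: T).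
    apply/forall_inP => x; rewrite in_setU1 => /orP [/eqP ->|xT].
      case/set0Pn: T0 => u uT; apply/existsP; exists [set v; u].
      apply/andP; split; first by apply/imsetP; exists u.
      by rewrite !inE eqxx.
    apply/existsP; exists [set v; x]; apply/andP; split; first by apply/imsetP; exists x.
    by rewrite !inE eqxx orbT.
  apply: le_trans (H _) _.
  have hK : (K \subset E) && covers K (v |: T) by rewrite KE cov.
  apply: le_trans (bigmin_le_cond (wsum w E) (fun K => wsum w K) hK) _.
  rewrite /wsum big_imset //=.
  move=> u u' uT u'T /= e.
  have : u \in [set v; u'] by rewrite -e !inE eqxx orbT.
  by rewrite !inE (negbTE (neq u uT)) /= => /eqP.
- move=> hs S.
  rewrite /ec_cost; apply: le_bigmin.
    apply: (@key _ _ E w a hG ha hs hw) => //.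
    apply/forall_inP => v _; have [f fE vf] := hiso v.
    by apply/existsP; exists f; rewrite fE.
  move=> K /andP [KE cov]; exact: (@key _ _ E w a hG ha hs hw).
Qed.
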